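(* Let $\delta<\mathfrak t$ be an ordinal and assume: (i) $\bar A=\langle A_i:i<\delta\rangle$ is a sequence of members of $[\omega]^{\aleph_0}$; (ii) $\langle B_n:n<\omega\rangle\subseteq[\omega]^{\aleph_0}$ is $\subseteq^*$-decreasing (i.e. $B_m\subseteq^*B_n$ for $n<m$); (iii) $A_i\cap B_n$ is infinite for every $i<\delta$ and $n<\omega$; (iv) for all $i<j<\delta$ there is $n<\omega$ with $A_j\cap B_n\subseteq^* A_i\cap B_n$. Then there is $A\in[\omega]^{\aleph_0}$ such that $A\subseteq^* A_i$ for all $i<\delta$ and $A\subseteq^* B_n$ for all $n<\omega$.
   Context: $[\omega]^{\aleph_0}$ is the set of infinite subsets of $\omega$; $A\subseteq^* B$ means $A\setminus B$ is finite. $\mathfrak t$ is the least $\kappa$ such that there is a sequence $\langle X_\alpha:\alpha<\kappa\rangle\subseteq[\omega]^{\aleph_0}$ with $X_\beta\subseteq^* X_\alpha$ for $\alpha<\beta<\kappa$ and no $X\in[\omega]^{\aleph_0}$ satisfying $X\subseteq^*X_\alpha$ for all $\alpha$. *)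

(* Defs.v *)
From Stdlib Require Import Arith Wellfounded.

Definition infinite (X : nat -> Prop) : Prop :=
  ~ (exists N, forall k, X k -> k < N).

Definition almost_sub (X Y : nat -> Prop) : Prop :=
  exists N, forall k, X k -> ~ Y k -> k < N.

Definition inter (X Y : nat -> Prop) : nat -> Prop := fun k => X k /\ Y k.

(* (T, lt) is a strict well-order: an ordinal up to isomorphism *)
Definition is_well_order {T : Type} (lt : T -> T -> Prop) : Prop :=
  well_founded lt /\
  (forall x y z, lt x y -> lt y z -> lt x z) /\
  (forall x y, lt x y \/ x = y \/ lt y x).

(* The order type of (T, lt) is < t: no ordinal <= it carries a
   subseteq^*-decreasing sequence of infinite sets without an infinite
   pseudo-intersection.  Ordinals <= the order type of T are represented by
   the downward-closed subsets I of T (initial segments, including T). *)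
Definition below_t {T : Type} (lt : T -> T -> Prop) : Prop :=
  forall I : T -> Prop,
    (forall i j, lt j i -> I i -> I j) ->
    forall X : T -> nat -> Prop,
      (forall i, I i -> infinite (X i)) ->
      (forall i j, I i -> I j -> lt i j -> almost_sub (X j) (X i)) ->
      exists Y, infinite Y /\ (forall i, I i -> almost_sub Y (X i)).

(* Main.v *)
Require Import Defs.
From Stdlib Require Import Arith.
From Stdlib Require Import Lia Classical ClassicalEpsilon FunctionalExtensionality Wellfounded.

Definition decn (P : Prop) : nat := if excluded_middle_informative P then 1 else 0.

Fixpoint cnt (V : nat -> Prop) (k : nat) : nat :=
  match k with 0 => 0 | S k' => cnt V k' + decn (V k') end.

Lemma decn_0 (P : Prop) : ~ P -> decn P = 0.
Proof. intro H. unfold decn. destruct (excluded_middle_informative P); tauto. Qed.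
Lemma decn_1 (P : Prop) : P -> decn P = 1.
Proof. intro H. unfold decn. destruct (excluded_middle_informative P); tauto. Qed.
Lemma decn_le (P : Prop) : decn P <= 1.
Proof. unfold decn. destruct (excluded_middle_informative P); lia. Qed.

Lemma inf_ex X : infinite X -> forall N, exists k, N <= k /\ X k.
Proof.
  intros H N. apply NNPP. intro C. apply H. exists N. intros k Hk.
  destruct (Nat.lt_ge_cases k N) as [h|h]; auto. exfalso; apply C; eauto.
Qed.

Lemma ex_inf X : (forall N, exists k, N <= k /\ X k) -> infinite X.
Proof. intros H [N HN]. destruct (H N) as [k [h1 h2]]. specialize (HN k h2). lia. Qed.

Lemma cnt_mono_k V k k' : k <= k' -> cnt V k <= cnt V k'.
Proof.
  induction k'; intro H.
  - assert (k = 0) by lia; subst; auto.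
  - destruct (Nat.eq_dec k (S k')). subst; auto.
    simpl. specialize (IHk' ltac:(lia)). lia.
Qed.

Lemma cnt_almost U V M : (forall x, U x -> ~ V x -> x < M) -> forall k, cnt U k <= cnt V k + M.
Proof.
  intro H.
  assert (forall k, cnt U k <= cnt V k + Nat.min k M).
  { induction k; cbn [cnt]; [lia|].
    destruct (classic (U k)) as [HU|HU]; destruct (classic (V k)) as [HV|HV].
    - rewrite (decn_1 _ HU), (decn_1 _ HV). lia.
    - rewrite (decn_1 _ HU), (decn_0 _ HV). specialize (H k HU HV). lia.
    - rewrite (decn_0 _ HU). lia.
    - rewrite (decn_0 _ HU). lia. }
  intro k. specialize (H0 k). lia.
Qed.

Lemma cnt_inf V : infinite V -> forall c, exists K, forall k, K <= k -> c <= cnt V k.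
Proof.
  intros HV c. induction c.
  - exists 0. intros; lia.
  - destruct IHc as [K HK]. destruct (inf_ex V HV K) as [v [h1 h2]].
    exists (S v). intros k Hk.
    pose proof (cnt_mono_k V (S v) k Hk). simpl in H.
    rewrite (decn_1 _ h2) in H. specialize (HK v h1). lia.
Qed.

Lemma cnt_gap V a d : (forall x, a <= x < a + d -> ~ V x) -> cnt V (a + d) = cnt V a.
Proof.
  induction d; intro H.
  - rewrite Nat.add_0_r; auto.
  - rewrite Nat.add_succ_r. simpl. rewrite decn_0 by (apply H; lia).
    rewrite IHd; [lia|]. intros; apply H; lia.
Qed.

Lemma ymono (y : nat -> nat) (Hy : forall t, y t < y (S t)) : forall u v, u < v -> y u < y v.
Proof.
  intros u v; induction v; intro H; [lia|].
  destruct (Nat.eq_dec u v). subst; auto. specialize (IHv ltac:(lia)). specialize (Hy v). lia.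
Qed.

Lemma cnt_enum (y : nat -> nat) (Hy : forall t, y t < y (S t)) :
  forall t, cnt (fun x => exists u, y u = x) (y t) <= t.
Proof.
  pose proof (ymono y Hy) as Hm.
  induction t.
  - replace (y 0) with (0 + y 0) by lia. rewrite cnt_gap. simpl; lia.
    intros x Hx [u Hu]. subst. destruct u. lia. specialize (Hm 0 (S u) ltac:(lia)). lia.
  - replace (y (S t)) with (S (y t) + (y (S t) - S (y t))) by (specialize (Hy t); lia).
    rewrite cnt_gap.
    + simpl. pose proof (decn_le (exists u, y u = y t)). lia.
    + intros x Hx [u Hu]. subst.
      destruct (Nat.lt_ge_cases u (S t)).
      * destruct (Nat.eq_dec u t). subst; lia. specialize (Hm u t ltac:(lia)). lia.
      * destruct (Nat.eq_dec u (S t)). subst; lia. specialize (Hm (S t) u ltac:(lia)). lia.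
Qed.

Definition good (B : nat -> nat -> Prop) (Sx V : nat -> Prop) :=
  forall c N, exists k, N <= k /\ Sx k /\ forall m, m <= cnt V k + c -> B m k.

Fixpoint yseq (fY fs : nat -> nat) (t : nat) : nat :=
  match t with
  | 0 => fY (fs 0)
  | S t' => fY (Nat.max (fs (S t')) (S (yseq fY fs t')))
  end.

Lemma thin_core B Sx (Y : nat -> Prop) (fY fs : nat -> nat)
  (HfY : forall n, n <= fY n /\ Y (fY n))
  (Hfs : forall t, t <= fs t /\ Sx (fs t) /\ forall l, l <= 2 * t -> B l (fs t)) :
  exists V, infinite V /\ (forall x, V x -> Y x) /\ good B Sx V.
Proof.
  set (y := yseq fY fs).
  assert (Hy1 : forall t, fs t <= y t /\ Y (y t)).
  { destruct t; simpl; unfold y; simpl.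
    - apply HfY.
    - destruct (HfY (Nat.max (fs (S t)) (S (yseq fY fs t)))). split; auto. lia. }
  assert (Hy2 : forall t, y t < y (S t)).
  { intro t. unfold y; simpl. destruct (HfY (Nat.max (fs (S t)) (S (yseq fY fs t)))). lia. }
  exists (fun x => exists u, y u = x). split; [|split].
  - apply ex_inf. intro N. exists (y N). split; [|eauto].
    destruct (Hy1 N), (Hfs N). lia.
  - intros x [u Hu]; subst. apply Hy1.
  - intros c N. exists (fs (c + N)).
    destruct (Hfs (c + N)) as [h1 [h2 h3]].
    split; [lia|]. split; auto. intros m Hm. apply h3.
    pose proof (cnt_enum y Hy2 (c + N)).
    pose proof (cnt_mono_k (fun x => exists u, y u = x) _ _ (proj1 (Hy1 (c + N)))).
    lia.
Qed.

Lemma thin B Sx (Hs : forall m N0, exists k, N0 <= k /\ Sx k /\ forall l, l <= m -> B l k)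
  Y (HY : infinite Y) : exists V, infinite V /\ (forall x, V x -> Y x) /\ good B Sx V.
Proof.
  pose proof (inf_ex _ HY) as HY'.
  apply (thin_core B Sx Y
    (fun n => proj1_sig (constructive_indefinite_description _ (HY' n)))
    (fun t => proj1_sig (constructive_indefinite_description _ (Hs (2 * t) t)))).
  - intro n. exact (proj2_sig (constructive_indefinite_description _ (HY' n))).
  - intro t. exact (proj2_sig (constructive_indefinite_description _ (Hs (2 * t) t))).
Qed.

Lemma good_sub B Sx U V : good B Sx V -> almost_sub U V -> good B Sx U.
Proof.
  intros HV [M HM] c N. destruct (HV (c + M) N) as [k [h1 [h2 h3]]].
  exists k. split; auto. split; auto. intros m Hm. apply h3.
  pose proof (cnt_almost U V M HM k). lia.
Qed.

Lemma subset_almost U Y Z : (forall x, U x -> Y x) -> almost_sub Y Z -> almost_sub U Z.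
Proof. intros H [M HM]. exists M. intros k Hk Hz. apply HM; auto. Qed.

Lemma Bfin (B : nat -> nat -> Prop)
  (HBdec : forall n m, n < m -> almost_sub (B m) (B n)) :
  forall m p, p <= m -> exists N, forall k, B m k -> N <= k -> forall l, l <= p -> B l k.
Proof.
  intros m p. induction p; intro Hp.
  - destruct m.
    + exists 0. intros k Hk _ l Hl. assert (l = 0) by lia; subst; auto.
    + destruct (HBdec 0 (S m) ltac:(lia)) as [N HN]. exists N.
      intros k Hk Hk2 l Hl. assert (l = 0) by lia; subst.
      apply NNPP; intro C. specialize (HN k Hk C). lia.
  - destruct (IHp ltac:(lia)) as [N1 H1].
    destruct (Nat.eq_dec (S p) m).
    + subst. exists N1. intros k Hk Hk2 l Hl.
      destruct (Nat.eq_dec l (S p)); [subst; auto|]. apply H1; auto; lia.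
    + destruct (HBdec (S p) m ltac:(lia)) as [N2 HN2]. exists (Nat.max N1 N2).
      intros k Hk Hk2 l Hl.
      destruct (Nat.eq_dec l (S p)).
      * subst. apply NNPP; intro C. specialize (HN2 k Hk C). lia.
      * apply H1; auto; lia.
Qed.

Theorem lemma2p4 (T : Type) (lt : T -> T -> Prop)
  (Hwo : is_well_order lt) (Ht : below_t lt)
  (A : T -> nat -> Prop) (B : nat -> nat -> Prop)
  (HA : forall i, infinite (A i))
  (HB : forall n, infinite (B n))
  (HBdec : forall n m, n < m -> almost_sub (B m) (B n))
  (HAB : forall i n, infinite (inter (A i) (B n)))
  (Hiv : forall i j, lt i j ->
          exists n, almost_sub (inter (A j) (B n)) (inter (A i) (B n))) :
  exists X : nat -> Prop, infinite X /\
    (forall i, almost_sub X (A i)) /\ (forall n, almost_sub X (B n)).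
Proof.
  destruct Hwo as [Hwf [Htr _]].
  assert (HsA : forall j m N0, exists k, N0 <= k /\ A j k /\ forall l, l <= m -> B l k).
  { intros j m N0. destruct (Bfin B HBdec m m (le_n m)) as [N HN].
    destruct (inf_ex _ (HAB j m) (Nat.max N N0)) as [k [h1 [h2 h3]]].
    exists k. split; [lia|]. split; auto. apply HN; auto; lia. }
  assert (HsT : forall m N0, exists k, N0 <= k /\ True /\ forall l, l <= m -> B l k).
  { intros m N0. destruct (Bfin B HBdec m m (le_n m)) as [N HN].
    destruct (inf_ex _ (HB m) (Nat.max N N0)) as [k [h1 h2]].
    exists k. split; [lia|]. split; auto. apply HN; auto; lia. }
  assert (Hpseudo : forall U, infinite U -> forall n, exists K, forall k,
             K <= k -> (forall m, m <= cnt U k -> B m k) -> B n k).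
  { intros U HU n. destruct (cnt_inf U HU n) as [K HK]. exists K.
    intros k Hk H. apply H. auto. }
  destruct (classic (exists j : T, True)) as [[j0 _]|Hne].
  - set (P := fun j (prev : forall i, lt i j -> nat -> Prop) (W : nat -> Prop) =>
          infinite W /\ good B (A j) W /\ forall i (h : lt i j), almost_sub W (prev i h)).
    set (step := fun j prev => epsilon (inhabits (fun _ : nat => True)) (P j prev)).
    set (V := Fix Hwf (fun _ => nat -> Prop) step).
    assert (HV : forall j, V j = step j (fun i _ => V i)).
    { intro j. unfold V. apply (Fix_eq Hwf (fun _ => nat -> Prop) step). intros x f g Hfg.
      assert (f = g) as E.
      { apply functional_extensionality_dep; intro y.
        apply functional_extensionality; intro p. apply Hfg. }
      rewrite E; reflexivity. }
    assert (Hind : forall j, infinite (V j) /\ good B (A j) (V j) /\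
                     forall i, lt i j -> almost_sub (V j) (V i)).
    { intro j. induction j as [j IH] using (well_founded_ind Hwf).
      rewrite HV. unfold step.
      assert (Hex : exists W, P j (fun i _ => V i) W).
      { destruct (Ht (fun i => lt i j)) with (X := V) as [Y [HYi HYs]].
        - intros a b Hba Ha. exact (Htr b a j Hba Ha).
        - intros i Hi. apply (IH i Hi).
        - intros i i' Hi Hi' Hlt. apply (IH i' Hi'). exact Hlt.
        - destruct (thin B (A j) (HsA j) Y HYi) as [W [HW1 [HW2 HW3]]].
          exists W. split; [auto|split; auto]. intros i h.
          apply subset_almost with Y; auto. }
      pose proof (epsilon_spec (inhabits (fun _ : nat => True)) (P j (fun i _ => V i)) Hex)
        as [a [b c]].
      exact (conj a (conj b (fun i h => c i h))). }
    destruct (Ht (fun _ => True)) with (X := V) as [U [HU HUs]].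
    + auto.
    + intros i _. apply Hind.
    + intros i i' _ _ Hlt. apply (Hind i'). exact Hlt.
    + assert (HgU : forall j, good B (A j) U).
      { intro j. apply good_sub with (V j). apply Hind. apply HUs; auto. }
      set (W := fun j k => A j k /\ forall m, m <= cnt U k -> B m k).
      destruct (Ht (fun _ => True)) with (X := W) as [Y [HY HYs]].
      * auto.
      * intros i _. apply ex_inf. intro N. destruct (HgU i 0 N) as [k [h1 [h2 h3]]].
        exists k. split; auto. split; auto. intros m Hm. apply h3. lia.
      * intros i j _ _ Hlt. destruct (Hiv i j Hlt) as [n [M HM]].
        destruct (Hpseudo U HU n) as [K HK].
        exists (Nat.max M K). intros k [Hk1 Hk2] Hk3.
        destruct (Nat.lt_ge_cases k (Nat.max M K)) as [h|h]; auto.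
        exfalso. apply Hk3. split; auto.
        apply NNPP; intro C.
        assert (k < M). { apply HM. split; auto. apply HK; auto; lia.
                         intros [C1 _]. auto. }
        lia.
      * exists Y. split; auto. split.
        -- intro i. apply subset_almost with Y; auto.
           destruct (HYs i I) as [M HM]. exists M. intros k Hk Hn.
           apply HM; auto. intros [C _]; auto.
        -- intro n. destruct (HYs j0 I) as [M HM].
           destruct (Hpseudo U HU n) as [K HK].
           exists (Nat.max M K). intros k Hk Hn.
           destruct (Nat.lt_ge_cases k (Nat.max M K)) as [h|h]; auto.
           exfalso. destruct (classic (W j0 k)) as [Hw|Hw].
           ++ apply Hn. apply HK; [lia|]. apply Hw.
           ++ specialize (HM k Hk Hw). lia.
  - destruct (thin B (fun _ => True) HsT (fun _ => True)) as [U [HU [_ HgU]]].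
    { apply ex_inf. intro N. exists N. auto. }
    exists (fun k => forall m, m <= cnt U k -> B m k). split; [|split].
    + apply ex_inf. intro N. destruct (HgU 0 N) as [k [h1 [_ h3]]].
      exists k. split; auto. intros m Hm. apply h3. lia.
    + intro i. exfalso. apply Hne. exists i. auto.
    + intro n. destruct (Hpseudo U HU n) as [K HK]. exists K.
      intros k Hk Hn. destruct (Nat.lt_ge_cases k K) as [h|h]; auto.
      exfalso. apply Hn. apply HK; auto.
Qed.
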